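(* Let $G=D\oplus R$ be an abelian group with $D$ divisible and $R$ reduced. Then $G$ is super directly finite if and only if both $D$ and $R$ are super directly finite.
   Context: All groups are abelian. A group $G$ is directly finite if there is no decomposition $G=A\oplus C$ with $C\ne0$ and $A\cong G$; $G$ is super directly finite ($G\in\mathcal{DF}^s$) if every epimorphic image of $G$ (including $G$) is directly finite. A group is reduced if it has no nonzero divisible subgroup. *)

(* Defs.v *)
From HB Require Import structures.
From mathcomp Require Import all_boot all_order all_algebra.
Set Implicit Arguments. Unset Strict Implicit. Unset Printing Implicit Defensive.
Import GRing.Theory.
Local Open Scope ring_scope.

Definition subgroup (G : zmodType) (S : G -> Prop) : Prop :=
  S 0 /\ (forall x y, S x -> S y -> S (x - y)).

Definition is_hom (G H : zmodType) (f : G -> H) : Prop :=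
  forall x y, f (x - y) = f x - f y.

(* G is directly finite: there is no internal decomposition G = A (+) C
   with C <> 0 and A isomorphic to G (isomorphism G ~ A given by an injective
   homomorphism f : G -> G with image exactly A). *)
Definition directly_finite (G : zmodType) : Prop :=
  ~ exists (A C : G -> Prop) (f : G -> G),
      subgroup A /\ subgroup C /\
      (forall x, A x -> C x -> x = 0) /\
      (forall g, exists a c, A a /\ C c /\ g = a + c) /\
      (exists c, C c /\ c <> 0) /\
      is_hom f /\ injective f /\ (forall a, A a <-> exists g, f g = a).

Definition super_directly_finite (G : zmodType) : Prop :=
  forall (H : zmodType) (p : G -> H),
    is_hom p -> (forall h, exists g, p g = h) -> directly_finite H.

Definition divisible (G : zmodType) : Prop :=
  forall (x : G) (n : nat), (0 < n)%N -> exists y : G, y *+ n = x.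

Definition reduced (G : zmodType) : Prop :=
  forall S : G -> Prop, subgroup S ->
    (forall x (n : nat), S x -> (0 < n)%N -> exists y, S y /\ y *+ n = x) ->
    forall x, S x -> x = 0.

(* Main.v *)
Require Import Defs.
From HB Require Import structures.
From mathcomp Require Import all_boot all_order all_algebra.
From mathcomp Require Import boolp classical_sets ring.
Set Implicit Arguments. Unset Strict Implicit. Unset Printing Implicit Defensive.
Import GRing.Theory Num.Theory.
Local Open Scope ring_scope.

Section PHom.
Variables (G H : zmodType) (T : G -> Prop) (HT : subgroup T) (f : G -> H)
  (hf : forall x y, T x -> T y -> f (x - y) = f x - f y).
Let T0 : T 0. Proof. by case: HT. Qed.
Let TB x y : T x -> T y -> T (x - y). Proof. by case: HT => _; apply. Qed.
Let TN x : T x -> T (- x). Proof. by move=> Tx; rewrite -sub0r; exact: TB. Qed.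
Let TD x y : T x -> T y -> T (x + y).
Proof. by move=> Tx Ty; rewrite -[y]opprK; apply: TB => //; exact: TN. Qed.
Lemma phom0 : f 0 = 0.
Proof. by have := hf T0 T0; rewrite subrr subrr. Qed.
Lemma phomN x : T x -> f (- x) = - f x.
Proof. by move=> Tx; have := hf T0 Tx; rewrite sub0r phom0 sub0r. Qed.
Lemma phomD x y : T x -> T y -> f (x + y) = f x + f y.
Proof. by move=> Tx Ty; rewrite -{1}[y]opprK hf ?phomN ?opprK //; exact: TN. Qed.
Lemma phomMn x n : T x -> f (x *+ n) = f x *+ n.
Proof.
move=> Tx; elim: n => [|n IH]; first by rewrite !mulr0n phom0.
have Txn : T (x *+ n) by elim: (n) => [|k IHk]; rewrite ?mulr0n // mulrS; exact: TD.
by rewrite !mulrS phomD // IH.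
Qed.
Lemma phomMz x (z : int) : T x -> f (x *~ z) = f x *~ z.
Proof.
move=> Tx; have Txn n : T (x *+ n) by elim: n => [|k IHk]; rewrite ?mulr0n // mulrS; exact: TD.
case: z => n; rewrite ?NegzE ?mulrNz ?phomN ?phomMn //; exact: Txn.
Qed.
End PHom.

Section Hom.
Variables (G H : zmodType) (f : G -> H) (hf : is_hom f).
Let HT : subgroup (fun _ : G => True). Proof. by []. Qed.
Let hf' : forall x y, True -> True -> f (x - y) = f x - f y. Proof. by move=> x y _ _; exact: hf. Qed.
Lemma hom0 : f 0 = 0. Proof. exact: (phom0 HT hf'). Qed.
Lemma homN x : f (- x) = - f x. Proof. exact: (phomN HT hf'). Qed.
Lemma homB x y : f (x - y) = f x - f y. Proof. exact: hf. Qed.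
Lemma homD x y : f (x + y) = f x + f y. Proof. exact: (phomD HT hf'). Qed.
Lemma homMn x n : f (x *+ n) = f x *+ n. Proof. exact: (phomMn HT hf'). Qed.
Lemma homMz x (z : int) : f (x *~ z) = f x *~ z. Proof. exact: (phomMz HT hf'). Qed.
Lemma hom_sum I (r : seq I) (P : pred I) (F : I -> G) :
  f (\sum_(i <- r | P i) F i) = \sum_(i <- r | P i) f (F i).
Proof.
elim: r => [|a r IH]; first by rewrite !big_nil hom0.
by rewrite !big_cons; case: (P a); rewrite ?homD IH.
Qed.
End Hom.

Lemma is_hom_comp (G H K : zmodType) (f : G -> H) (g : H -> K) :
  is_hom f -> is_hom g -> is_hom (g \o f).
Proof. by move=> hf hg x y /=; rewrite hf hg. Qed.

Section Quot.
Variables (G : zmodType) (S : G -> Prop) (HS : subgroup S).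

Lemma sg0 : S 0. Proof. by case: HS. Qed.
Lemma sgB x y : S x -> S y -> S (x - y). Proof. by case: HS => _; apply. Qed.
Lemma sgN x : S x -> S (- x).
Proof. by move=> Sx; rewrite -sub0r; apply: sgB => //; exact: sg0. Qed.
Lemma sgD x y : S x -> S y -> S (x + y).
Proof. by move=> Sx Sy; rewrite -[y]opprK; apply: sgB => //; exact: sgN. Qed.
Lemma sgMn x n : S x -> S (x *+ n).
Proof. move=> Sx; elim: n => [|n IH]; first by rewrite mulr0n; exact: sg0.
by rewrite mulrS; apply: sgD. Qed.
Lemma sgMz x (z : int) : S x -> S (x *~ z).
Proof. by move=> Sx; case: z => n; rewrite ?NegzE ?mulrNz; [|apply: sgN]; apply: sgMn. Qed.
Lemma sg_sum I (r : seq I) (P : pred I) (F : I -> G) :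
  (forall i, P i -> S (F i)) -> S (\sum_(i <- r | P i) F i).
Proof. by move=> h; apply: big_ind => //; [exact: sg0| exact: sgD]. Qed.

Definition cls (x : G) := fun y => S (y - x).
Definition qT (h : subgroup S) := {P : G -> Prop | exists x, P = cls x}.
Local Notation qtype := (qT HS).
Definition qpi (x : G) : qtype := exist _ (cls x) (ex_intro _ x erefl).
Definition qrep (P : qtype) : G := projT1 (cid (proj2_sig P)).
Lemma qeq (P Q : qtype) : sval P = sval Q -> P = Q.
Proof.
case: P Q => [P hP] [Q hQ] /= e; subst Q; congr exist; exact: Prop_irrelevance.
Qed.

Lemma qpiE x y : (qpi x = qpi y) <-> S (x - y).
Proof.
split.
  move=> /(congr1 sval) /= e.
  have : cls x x by rewrite /cls subrr; exact: sg0.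
  by rewrite e /cls.
move=> Sxy; apply: qeq => /=; apply: funext => z; apply: propext; rewrite /cls.
split=> h.
  by have := sgD h Sxy; rewrite addrA subrK.
by have := sgB h Sxy; rewrite opprB addrA subrK.
Qed.

Lemma qrepK P : qpi (qrep P) = P.
Proof.
rewrite /qrep; case: cid => x /= e; apply: qeq => /=; rewrite e.
by case: P e.
Qed.

Lemma qpi_surj P : exists x, P = qpi x.
Proof. by exists (qrep P); rewrite qrepK. Qed.

Definition qadd (P Q : qtype) := qpi (qrep P + qrep Q).
Definition qopp (P : qtype) := qpi (- qrep P).
Definition qzero := qpi 0.

Lemma qrep_pi x : S (qrep (qpi x) - x).
Proof. by apply/qpiE; rewrite qrepK. Qed.

Lemma qaddE x y : qadd (qpi x) (qpi y) = qpi (x + y).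
Proof.
apply/qpiE; have := sgD (qrep_pi x) (qrep_pi y).
by rewrite opprD addrACA.
Qed.

Lemma qoppE x : qopp (qpi x) = qpi (- x).
Proof. by apply/qpiE; rewrite opprK addrC; have := sgN (qrep_pi x); rewrite opprB. Qed.

Lemma qaddA : associative qadd.
Proof.
move=> P Q R; case: (qpi_surj P) (qpi_surj Q) (qpi_surj R) => [x ->] [y ->] [z ->].
by rewrite !qaddE addrA.
Qed.
Lemma qaddC : commutative qadd.
Proof.
move=> P Q; case: (qpi_surj P) (qpi_surj Q) => [x ->] [y ->].
by rewrite !qaddE addrC.
Qed.
Lemma qadd0 : left_id qzero qadd.
Proof. by move=> P; case: (qpi_surj P) => [x ->]; rewrite qaddE add0r. Qed.
Lemma qaddN : left_inverse qzero qopp qadd.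
Proof. by move=> P; case: (qpi_surj P) => [x ->]; rewrite qoppE qaddE addNr. Qed.

HB.instance Definition _ := gen_eqMixin qtype.
HB.instance Definition _ := gen_choiceMixin qtype.
HB.instance Definition _ := GRing.isZmodule.Build qtype qaddA qaddC qadd0 qaddN.

Lemma qpi_hom : is_hom qpi.
Proof.
move=> x y; have -> : qpi x - qpi y = qadd (qpi x) (qopp (qpi y)) by [].
by rewrite qoppE qaddE.
Qed.
Lemma qpi0 x : (qpi x = 0) <-> S x.
Proof. have -> : (0 : qtype) = qpi 0 by []. by rewrite qpiE subr0. Qed.
End Quot.


Definition pick {T : Type} (d : T) (P : T -> Prop) : T :=
  if pselect (exists x, P x) is left h then projT1 (cid h) else d.
Lemma pickP T (d : T) (P : T -> Prop) : (exists x, P x) -> P (pick d P).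
Proof. by rewrite /pick => h; case: pselect => // h'; case: cid. Qed.

Definition padd (G Y : zmodType) (T : G -> Prop) (psi : G -> Y) :=
  forall x y, T x -> T y -> psi (x - y) = psi x - psi y.

Section Inj.
Variables (G Y : zmodType) (divY : divisible Y) (S : G -> Prop) (HS : subgroup S)
  (phi0 : G -> Y) (hphi0 : padd S phi0).

Definition valid (t : (G -> Prop) * (G -> Y)) :=
  subgroup t.1 /\ (forall x, S x -> t.1 x) /\ padd t.1 t.2 /\
  (forall x, S x -> t.2 x = phi0 x).
Definition vT := {t | valid t}.
Definition Rle (a b : vT) : bool :=
  `[< (forall x, (sval a).1 x -> (sval b).1 x) /\
      (forall x, (sval a).1 x -> (sval b).2 x = (sval a).2 x) >].

Lemma valid0 : valid (S, phi0).
Proof. by split=> //; split=> //. Qed.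
Definition t0 : vT := exist _ _ valid0.

Lemma Rle_refl : forall t, Rle t t.
Proof. by move=> t; apply/asboolP. Qed.
Lemma Rle_trans : forall r s t, Rle r s -> Rle s t -> Rle r t.
Proof.
move=> r s t /asboolP [h1 h2] /asboolP [h3 h4]; apply/asboolP; split=> x Tx.
  by apply: h3; apply: h1.
by rewrite h4 ?h2 //; apply: h1.
Qed.

Lemma chain_bound (A : set vT) : total_on A Rle -> exists t, forall s, A s -> Rle s t.
Proof.
move=> tot.
case: (pselect (exists a, A a)) => [[a0 Aa0]|noA]; last first.
  by exists t0 => s As; exfalso; apply: noA; exists s.
pose U x := exists a, A a /\ (sval a).1 x.
pose Psi x := if pselect (U x) is left h then (sval (projT1 (cid h))).2 x else 0.
have key a x : A a -> (sval a).1 x -> Psi x = (sval a).2 x.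
  move=> Aa Tx; rewrite /Psi; case: pselect => [h|[]]; last by exists a.
  case: cid => b [Ab Tbx] /=.
  case: (tot a b Aa Ab) => /asboolP [h1 h2]; first by rewrite h2.
  by rewrite h2.
have common a b : A a -> A b -> exists c, [/\ A c, Rle a c & Rle b c].
  move=> Aa Ab; case: (tot a b Aa Ab) => h.
    by exists b; split=> //; exact: Rle_refl.
  by exists a; split=> //; exact: Rle_refl.
have vU : valid (U, Psi).
  split; [split|split; [|split]] => /=.
  - exists a0; split => //; case: (svalP a0) => [[]] //.
  - move=> x y [a [Aa Tx]] [b [Ab Ty]].
    case: (common a b Aa Ab) => c [Ac /asboolP [ac _] /asboolP [bc _]].
    exists c; split => //; case: (svalP c) => [[_ hc] _]; apply: hc; [exact: ac|exact: bc].
  - by move=> x Sx; exists a0; split => //; case: (svalP a0) => [_ [h _]]; apply: h.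
  - move=> x y [a [Aa Tx]] [b [Ab Ty]].
    case: (common a b Aa Ab) => c [Ac /asboolP [ac _] /asboolP [bc _]].
    have Tcx := ac _ Tx; have Tcy := bc _ Ty.
    case: (svalP c) => [[_ hc] [_ [pc _]]].
    rewrite !(key c) //; first exact: pc.
    exact: hc.
  - move=> x Sx; case: (svalP a0) => [_ [h1 [_ h2]]].
    by rewrite (key a0) // ?h2 //; apply: h1.
exists (exist _ _ vU) => s As; apply/asboolP; split => /= x Tx.
  by exists s.
by rewrite (key s).
Qed.

Section Extend.
Variables (t : vT) (x : G).
Let T := (sval t).1.
Let psi := (sval t).2.
Let vt : valid (sval t) := svalP t.
Let HT : subgroup T. Proof. by case: vt. Qed.
Let hpsi : padd T psi. Proof. by case: vt => _ [_ []]. Qed.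

Lemma ext_y : exists y : Y, forall z : int, T (x *~ z) -> psi (x *~ z) = y *~ z.
Proof.
case: (pselect (exists n, (0 < n)%N /\ T (x *+ n))) => [ex|nex].
  have ex' : exists n, `[< (0 < n)%N /\ T (x *+ n) >] by case: ex => n h; exists n; apply/asboolP.
  case: (ex_minnP ex') => m /asboolP [m0 Tm] minm.
  case: (divY (psi (x *+ m)) m0) => y ey; exists y => z Tz.
  have mz : (m%:Z != 0) by rewrite eqz_nat -lt0n.
  have ez := divz_eq z m%:Z.
  set q := (z %/ m%:Z)%Z in ez; set r := (z %% m%:Z)%Z in ez.
  have r0 : 0 <= r by apply: modz_ge0.
  have rm : r < m%:Z by have := ltz_mod z mz.
  have xz : x *~ z = (x *+ m) *~ q + x *~ r.
    by rewrite {1}ez mulrzDr mulrC mulrzA -pmulrn.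
  have Tr : T (x *~ r).
    have -> : x *~ r = x *~ z - (x *+ m) *~ q by rewrite xz addrC addKr.
    apply: sgB => //; apply: sgMz => //; exact: sgMn.
  have r_0 : r = 0.
    case: r Tr r0 rm {xz ez} => // k Tk _ rm.
    case: k Tk rm => // k Tk rm; exfalso.
    have := minm k.+1; rewrite ltz_nat in rm.
    by move=> /(_ (asboolT (conj (ltn0Sn k) Tk))); rewrite leqNgt rm.
  rewrite xz r_0 addr0 (phomMz HT hpsi q Tm) -ey.
  by rewrite pmulrn -mulrzA ez r_0 addr0 mulrC.
exists 0 => z Tz; rewrite mul0rz.
case: (z =P 0) => [->|nz]; first by rewrite mulr0z (phom0 HT hpsi).
exfalso; apply: nex; exists `|z|%N; split; first by rewrite absz_gt0; apply/eqP.
case: z Tz nz => n Tn _; first by [].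
by rewrite NegzE mulrNz in Tn; have := sgN HT Tn; rewrite opprK.
Qed.
End Extend.

Lemma extend (t : vT) (x : G) : exists t' : vT, Rle t t' /\ (sval t').1 x.
Proof.
set T := (sval t).1; set psi := (sval t).2.
have vt : valid (sval t) := svalP t.
have HT : subgroup T by case: vt.
have hpsi : padd T psi by case: vt => _ [_ []].
have TS : forall s, S s -> T s by case: vt => _ [].
have psiS : forall s, S s -> psi s = phi0 s by case: vt => _ [_ []].
case: (ext_y t x) => y hy; rewrite -/T -/psi in hy.
pose T' g := exists s (z : int), T s /\ g = s + x *~ z.
pose Q g v := exists s (z : int), [/\ T s, g = s + x *~ z & v = psi s + y *~ z].
pose psi' g := pick 0 (Q g).
have wd s1 s2 z1 z2 : T s1 -> T s2 -> s1 + x *~ z1 = s2 + x *~ z2 ->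
    psi s1 + y *~ z1 = psi s2 + y *~ z2.
  move=> T1 T2 e.
  have e' : x *~ (z1 - z2) = s2 - s1.
    by rewrite mulrzBr -[x *~ z1](addKr s1) e addrA addrK addrC.
  have h := hy (z1 - z2); rewrite e' in h; have := h (sgB HT T2 T1).
  rewrite hpsi // mulrzBr => /eqP; rewrite subr_eq => /eqP ->.
  by rewrite addrAC subrK addrC.
have psi'E s z : T s -> psi' (s + x *~ z) = psi s + y *~ z.
  move=> Ts; have : Q (s + x *~ z) (psi' (s + x *~ z)).
    by apply: pickP; exists (psi s + y *~ z), s, z.
  case=> s' [z'] [Ts' e ->]; exact: wd.
have HT' : subgroup T'.
  split; first by exists 0, 0; split; [exact: sg0 | rewrite mulr0z addr0].
  move=> a b [s1 [z1 [T1 ->]]] [s2 [z2 [T2 ->]]].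
  exists (s1 - s2), (z1 - z2); split; first exact: sgB.
  by rewrite mulrzBr opprD addrACA.
have vt' : valid (T', psi').
  split=> //; split; [|split] => /=.
  - by move=> s Ss; exists s, 0; split; [exact: TS | rewrite mulr0z addr0].
  - move=> a b [s1 [z1 [T1 ->]]] [s2 [z2 [T2 ->]]].
    have -> : s1 + x *~ z1 - (s2 + x *~ z2) = (s1 - s2) + x *~ (z1 - z2)
      by rewrite mulrzBr opprD addrACA.
    rewrite psi'E; last exact: sgB.
    rewrite psi'E; last exact: T1.
    rewrite psi'E; last exact: T2.
    by rewrite hpsi // mulrzBr opprD addrACA.
  - move=> s Ss; rewrite -[s]addr0 -(mulr0z x) psi'E ?mulr0z ?addr0; last exact: TS.
    exact: psiS.
exists (exist _ _ vt'); split => /=.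
  apply/asboolP; split => /= s Ts; first by exists s, 0; rewrite mulr0z addr0.
  by rewrite -[s]addr0 -(mulr0z x) psi'E // mulr0z !addr0.
by exists 0, 1; split; [exact: sg0 | rewrite add0r].
Qed.

Lemma inj_ext : exists phi : G -> Y, is_hom phi /\ forall x, S x -> phi x = phi0 x.
Proof.
have [t tmax] := ZL_preorder t0 Rle_refl Rle_trans chain_bound.
have vt : valid (sval t) := svalP t.
have all x : (sval t).1 x.
  have [t' [le1 Tx]] := extend t x.
  by have /asboolP [h _] := tmax t' le1; apply: h.
exists (sval t).2; split.
  by move=> a b; case: vt => _ [_ [h _]]; apply: h.
by case: vt => _ [_ [_ h]].
Qed.
End Inj.


Section Target.
Variables (p : nat) (hp : prime p).

Definition Zp (a : rat) := exists u v : int, ~~ (p%:Z %| v)%Z /\ a = u%:~R / v%:~R.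

Lemma ndvd_ne0 (v : int) : ~~ (p%:Z %| v)%Z -> v != 0.
Proof. by apply: contra => /eqP ->; rewrite dvdz0. Qed.

Lemma ndvdM (v w : int) : ~~ (p%:Z %| v)%Z -> ~~ (p%:Z %| w)%Z -> ~~ (p%:Z %| v * w)%Z.
Proof. by rewrite !dvdzE abszM Euclid_dvdM // => /negbTE -> /negbTE ->. Qed.

Lemma Zp_sub : subgroup Zp.
Proof.
split.
  exists 0, 1; split; last by rewrite mul0r.
  by rewrite dvdzE /= dvdn1; case: p hp => [|[|]].
move=> a b [u [v [hv ->]]] [u' [v' [hv' ->]]].
exists (u * v' - u' * v), (v * v'); split; first exact: ndvdM.
have v0 : v%:~R != 0 :> rat by rewrite intr_eq0 ndvd_ne0.
have v0' : v'%:~R != 0 :> rat by rewrite intr_eq0 ndvd_ne0.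
rewrite intrB !intrM; field.
by rewrite v0 v0'.
Qed.

Let ZS := Zp_sub.
Lemma Zp_int (z : int) : Zp z%:~R.
Proof.
exists z, 1; split; last by rewrite divr1.
by rewrite dvdzE /= dvdn1; case: p hp => [|[|]].
Qed.

Definition Sp (q : {poly rat}) := forall i, Zp q`_i.
Lemma Sp_sub : subgroup Sp.
Proof.
split; first by move=> i; rewrite coef0; exact: (sg0 ZS).
by move=> a b ha hb i; rewrite coefB; apply: (sgB ZS).
Qed.
Let SS := Sp_sub.

Definition Yt := qT Sp_sub.
Definition pY (q : {poly rat}) : Yt := qpi Sp_sub q.
Lemma pY_hom : is_hom pY. Proof. exact: qpi_hom. Qed.
Lemma pYE a b : pY a = pY b <-> Sp (a - b). Proof. exact: qpiE. Qed.
Lemma pY0 a : pY a = 0 <-> Sp a. Proof. exact: qpi0. Qed.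

Lemma SpMX q : Sp (q * 'X) <-> Sp q.
Proof.
split=> h i.
  by have := h i.+1; rewrite coefMX.
rewrite coefMX; case: ifP => _; last exact: h.
exact: (sg0 ZS).
Qed.

Lemma Sp_scaleXn (c : rat) k : Zp c -> Sp (c *: 'X^k).
Proof.
move=> hc i; rewrite coefZ coefXn; case: (i == k); first by rewrite mulr1.
by rewrite mulr0; exact: (sg0 ZS).
Qed.

Lemma Y_div : divisible Yt.
Proof.
move=> z n n0; have [q ->] := qpi_surj z.
exists (pY (n%:R^-1 *: q)); rewrite -(homMn pY_hom) scalerMnl.
by rewrite -mulr_natr mulVf ?scale1r // pnatr_eq0 -lt0n.
Qed.

Definition eY k : Yt := pY (p%:R^-1 *: 'X^k).

Lemma eY_p k : eY k *+ p = 0.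
Proof.
rewrite -(homMn pY_hom) scalerMnl -mulr_natr mulVf ?scale1r.
  apply/pY0 => i; rewrite coefXn; case: (i == k); last exact: (sg0 ZS).
  by have := Zp_int 1; rewrite mulr1z.
by rewrite pnatr_eq0; case: p hp.
Qed.

Lemma not_Zp_invp : ~ Zp p%:R^-1.
Proof.
move=> [u [v [hv e]]].
have v0 : v%:~R != 0 :> rat by rewrite intr_eq0 ndvd_ne0.
have p0 : p%:R != 0 :> rat by rewrite pnatr_eq0; case: p hp.
have : v%:~R = p%:R * u%:~R :> rat.
  by rewrite -[u%:~R](divfK v0) -e mulrA mulfV // mul1r.
rewrite -[p%:R]/((p%:Z)%:~R) -intrM => /eqP; rewrite eqr_int => /eqP ev.
by move: hv; rewrite ev dvdz_mulr.
Qed.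

Lemma poly_split (q : {poly rat}) :
  q = (\poly_(i < size q) q`_i.+1) * 'X + (q`_0)%:P.
Proof.
apply/polyP => i; rewrite coefD coefMX coefC coef_poly.
case: i => [|i] /=; first by rewrite add0r.
rewrite addr0; case: ifP => // /negbT; rewrite -leqNgt => h.
by rewrite nth_default // (leq_trans h).
Qed.

Lemma pYrep q : Sp (qrep (HS:=Sp_sub) (pY q) - q).
Proof. exact: qrep_pi. Qed.

Lemma Y_notDF : ~ directly_finite Yt.
Proof.
apply; pose A (z : Yt) := exists q, z = pY (q * 'X).
pose C (z : Yt) := exists c, z = pY c%:P.
pose f (z : Yt) := pY (qrep (HS:=Sp_sub) z * 'X).
have fE q : f (pY q) = pY (q * 'X).
  by apply/pYE; rewrite -mulrBl; apply/SpMX; exact: pYrep.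
have hf : is_hom f.
  move=> a b; have [qa ->] := qpi_surj a; have [qb ->] := qpi_surj b.
  by rewrite -/(pY _) -/(pY _) -(homB pY_hom) !fE mulrBl (homB pY_hom).
exists A, C, f; split; [|split; [|split; [|split; [|split; [|split]]]]].
- split; first by exists 0; rewrite mul0r (hom0 pY_hom).
  by move=> _ _ [a ->] [b ->]; exists (a - b); rewrite mulrBl (homB pY_hom).
- split; first by exists 0; rewrite (hom0 pY_hom).
  by move=> _ _ [a ->] [b ->]; exists (a - b); rewrite polyCB (homB pY_hom).
- move=> z [q ->] [c e]; move/pYE: (e) => h.
  have := h 0%N; rewrite coefB coefMX coefC /= sub0r => hc.
  rewrite e; apply/pY0 => i; rewrite coefC; case: ifP => _; last exact: (sg0 ZS).
  by have := sgN ZS hc; rewrite opprK.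
- move=> z; have [q ->] := qpi_surj z.
  exists (pY ((\poly_(i < size q) q`_i.+1) * 'X)), (pY (q`_0)%:P).
  split; [by exists (\poly_(i < size q) q`_i.+1) | split; [by exists (q`_0)|]].
  by rewrite -(homD pY_hom) -poly_split.
- exists (pY (p%:R^-1)%:P); split; first by exists p%:R^-1.
  by move/pY0 => /(_ 0%N); rewrite coefC /=; exact: not_Zp_invp.
- exact: hf.
- split.
  + move=> a b e; have [qa ea] := qpi_surj a; have [qb eb] := qpi_surj b.
    move: e; rewrite ea eb -/(pY qa) -/(pY qb) !fE => /pYE.
    by rewrite -mulrBl => /SpMX /pYE.
  + move=> z; split.
      by move=> [q ->]; exists (pY q); rewrite fE.
    by move=> [g <-]; exists (qrep (HS:=Sp_sub) g).
Qed.

Section Gen.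
Variables (I : Yt -> Prop) (HI : subgroup I)
  (dI : forall x n, I x -> (0 < n)%N -> exists y, I y /\ y *+ n = x)
  (eI : forall k, I (eY k)).

Lemma gen_mono (c : rat) k : Zp (c *+ p) -> I (pY (c *: 'X^k)).
Proof.
move=> [u [v [hv e]]].
have cop : coprimez p%:Z v by rewrite coprimezE prime_coprime // -dvdzE.
case/coprimezP: cop => [[a b]] /= hab.
have v0 : v%:~R != 0 :> rat by rewrite intr_eq0 ndvd_ne0.
have p0 : p%:R != 0 :> rat by rewrite pnatr_eq0; case: p hp.
have hab' : a%:~R * p%:R + b%:~R * v%:~R = 1 :> rat.
  by rewrite -[p%:R]/((p%:Z)%:~R) -!intrM -intrD hab.
have ec : c = u%:~R / v%:~R / p%:R.
  by rewrite -e -[c *+ p]mulr_natr mulfK.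
have -> : pY (c *: 'X^k) = eY k *~ (u * b).
  rewrite /eY -(homMz pY_hom) scalerMzl; apply/pYE; rewrite -scalerBl.
  apply: Sp_scaleXn.
  have -> : c - p%:R^-1 *~ (u * b) = (u * a)%:~R / v%:~R.
    rewrite ec -[p%:R^-1 *~ _]mulrzl !intrM.
    have h : u%:~R / v%:~R / p%:R - u%:~R * b%:~R * p%:R^-1 - (u%:~R * a%:~R) / v%:~R =
        u%:~R / (v%:~R * p%:R) * (1 - (a%:~R * p%:R + b%:~R * v%:~R)) :> rat.
      by field; rewrite v0 p0.
    by move: h; rewrite hab' subrr mulr0 => /eqP; rewrite subr_eq0 => /eqP.
  by exists (u * a), v; split.
by apply: sgMz.
Qed.

Lemma gen_p s : Sp (s *+ p) -> I (pY s).
Proof.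
move=> hs; rewrite -[s]coefK poly_def /pY (hom_sum (qpi_hom Sp_sub)).
apply: (sg_sum HI) => i _; apply: gen_mono.
by have := hs i; rewrite coefMn.
Qed.

Lemma gen_pn n s : Sp (s *+ (p ^ n)) -> I (pY s).
Proof.
elim: n s => [|n IH] s hs.
  by move: hs; rewrite expn0 mulr1n => /pY0 ->; exact: (sg0 HI).
have : I (pY (s *+ p)) by apply: IH; rewrite -mulrnA -expnS.
rewrite (homMn pY_hom) => Ip.
have p0 : (0 < p)%N by apply: prime_gt0.
case: (dI Ip p0) => y [Iy ey]; have [r er0] := qpi_surj y.
have er : y = pY r := er0.
have : pY ((r - s) *+ p) = 0.
  by rewrite !(homMn pY_hom) (homB pY_hom) mulrnBl -er ey subrr.
move/pY0 => /gen_p Irs.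
have -> : pY s = pY r - pY (r - s) by rewrite (homB pY_hom) opprB addrC subrK.
by apply: (sgB HI) => //; rewrite -er.
Qed.

Lemma rat_pn (a : rat) : exists n, Zp (a *+ (p ^ n)).
Proof.
have d0 : (0 < `|denq a|)%N by rewrite absz_gt0 denq_neq0.
case: (pfactor_coprime hp d0) => m cop e.
set D := `|denq a|%N in d0 e cop; set N := logn p D in e.
have dD : denq a = D%:Z by rewrite /D gtz0_abs ?denq_gt0.
exists N; exists (numq a), m; split.
  by rewrite dvdzE /= -prime_coprime.
have m0 : m%:R != 0 :> rat.
  by rewrite pnatr_eq0; apply/eqP => m0; move: e d0; rewrite m0 mul0n => ->.
have pn0 : (p ^ N)%:R != 0 :> rat.
  by rewrite pnatr_eq0 expn_eq0; case: p hp.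
have ed : (denq a)%:~R = m%:R * (p ^ N)%:R :> rat.
  by rewrite dD e -natrM.
have ea := divq_num_den a.
rewrite -{1}ea ed -[_ *+ (p ^ _)]mulr_natr.
by field; rewrite m0 pn0.
Qed.

Lemma Y_gen z : I z.
Proof.
have [q ->] := qpi_surj z.
have [n hn] : exists n, forall i, Zp (q`_i *+ (p ^ n)).
  have : forall N, exists n, forall i, (i < N)%N -> Zp (q`_i *+ (p ^ n)).
    elim=> [|N [n IH]]; first by exists 0%N.
    have [n2 h2] := rat_pn q`_N.
    exists (n + n2)%N => i; rewrite ltnS leq_eqVlt => /orP [/eqP ->|iN].
      by rewrite expnD mulnC mulrnA; apply: sgMn.
    by rewrite expnD mulrnA; apply: sgMn => //; apply: IH.
  case/(_ (size q)) => n h; exists n => i.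
  case: (ltnP i (size q)) => [|hi]; first exact: h.
  by rewrite nth_default // mul0rn; exact: (sg0 ZS).
by apply: (gen_pn (n := n)) => i; rewrite coefMn.
Qed.
End Gen.
End Target.


Definition divS (G : zmodType) (S : G -> Prop) :=
  forall x n, S x -> (0 < n)%N -> exists y, S y /\ y *+ n = x.

Definition pad (N : nat) (n : nat -> int) k : int := if (k < N)%N then n k else 0.

Lemma sum_pad (V : zmodType) (v : nat -> V) (n : nat -> int) N M : (N <= M)%N ->
  \sum_(0 <= k < N) v k *~ n k = \sum_(0 <= k < M) v k *~ pad N n k.
Proof.
move=> NM; rewrite (big_cat_nat (leq0n N) NM) /=.
rewrite [X in _ = _ + X]big_nat_cond [X in _ = _ + X]big1 ?addr0; last first.
  by move=> k /andP [/andP [h _] _]; rewrite /pad ltnNge h mulr0z.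
by apply: eq_big_nat => k /andP [_ h]; rewrite /pad h.
Qed.

Lemma mulrz_p (V : zmodType) (y : V) (p : nat) (z : int) :
  y *+ p = 0 -> (p%:Z %| z)%Z -> y *~ z = 0.
Proof.
move=> yp /dvdzP [j ->]; rewrite mulrC mulrzA -pmulrn yp mul0rz //.
Qed.

Section Key.
Variables (H : zmodType) (p : nat) (hp : prime p) (B : H -> Prop) (HB : subgroup B)
  (w : nat -> H) (wp : forall k, w k *+ p = 0)
  (indep : forall N (n : nat -> int), B (\sum_(0 <= k < N) w k *~ n k) ->
     forall k, (k < N)%N -> (p%:Z %| n k)%Z).

Local Notation e := (eY hp).
Local Notation Y := (Yt hp).

Lemma e_p k : e k *+ p = 0. Proof. exact: eY_p. Qed.

Definition Tw x := exists b N (n : nat -> int), B b /\ x = b + \sum_(0 <= k < N) w k *~ n k.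
Definition phi0 x : Y := pick 0 (fun v => exists b N (n : nat -> int),
  [/\ B b, x = b + \sum_(0 <= k < N) w k *~ n k & v = \sum_(0 <= k < N) e k *~ n k]).

Lemma wd b1 N1 n1 b2 N2 n2 : B b1 -> B b2 ->
  b1 + \sum_(0 <= k < N1) w k *~ n1 k = b2 + \sum_(0 <= k < N2) w k *~ n2 k ->
  \sum_(0 <= k < N1) e k *~ n1 k = \sum_(0 <= k < N2) e k *~ n2 k.
Proof.
move=> B1 B2 eq; set M := maxn N1 N2.
rewrite !(sum_pad _ _ (leq_maxl N1 N2)) !(sum_pad _ _ (leq_maxr N1 N2)) -/M in eq *.
set m1 := pad N1 n1 in eq *; set m2 := pad N2 n2 in eq *.
have hB : B (\sum_(0 <= k < M) w k *~ (m1 k - m2 k)).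
  have -> : \sum_(0 <= k < M) w k *~ (m1 k - m2 k) = b2 - b1.
    rewrite (eq_bigr (fun k => w k *~ m1 k - w k *~ m2 k)); last by move=> k _; rewrite mulrzBr.
    rewrite sumrB -[\sum_(0 <= k < M) w k *~ m1 k](addKr b1) eq.
    by rewrite addrA addrK addrC.
  exact: sgB.
apply/eqP; rewrite -subr_eq0 -sumrB; apply/eqP; rewrite big_nat_cond big1 //.
move=> k /andP [/andP [_ kM] _]; rewrite -mulrzBr; apply: mulrz_p; first exact: e_p.
exact: (indep hB).
Qed.

Lemma phi0E b N n : B b -> phi0 (b + \sum_(0 <= k < N) w k *~ n k) = \sum_(0 <= k < N) e k *~ n k.
Proof.
move=> Bb; have : exists v, exists b' N' (n' : nat -> int),
  [/\ B b', b + \sum_(0 <= k < N) w k *~ n k = b' + \sum_(0 <= k < N') w k *~ n' k &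
      v = \sum_(0 <= k < N') e k *~ n' k].
  by exists (\sum_(0 <= k < N) e k *~ n k), b, N, n.
move=> ex; have := pickP 0 ex; rewrite -/(phi0 _) => [[b' [N' [n' [Bb' eq ->]]]]].
by symmetry; apply: (wd Bb Bb' eq).
Qed.

Lemma combine N1 n1 N2 n2 :
  \sum_(0 <= k < N1) w k *~ n1 k - \sum_(0 <= k < N2) w k *~ n2 k =
  \sum_(0 <= k < maxn N1 N2) w k *~ (pad N1 n1 k - pad N2 n2 k).
Proof.
rewrite (sum_pad _ _ (leq_maxl N1 N2)) (sum_pad _ _ (leq_maxr N1 N2)) -sumrB.
by apply: eq_bigr => k _; rewrite mulrzBr.
Qed.
Lemma combineY N1 n1 N2 n2 :
  \sum_(0 <= k < N1) e k *~ n1 k - \sum_(0 <= k < N2) e k *~ n2 k =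
  \sum_(0 <= k < maxn N1 N2) e k *~ (pad N1 n1 k - pad N2 n2 k).
Proof.
rewrite (sum_pad _ _ (leq_maxl N1 N2)) (sum_pad _ _ (leq_maxr N1 N2)) -sumrB.
by apply: eq_bigr => k _; rewrite mulrzBr.
Qed.

Lemma Tw_sub : subgroup Tw.
Proof.
split.
  exists 0, 0%N, (fun _ => 0); split; first exact: sg0.
  by rewrite big_geq // addr0.
move=> _ _ [b1 [N1 [n1 [B1 ->]]]] [b2 [N2 [n2 [B2 ->]]]].
exists (b1 - b2), (maxn N1 N2), (fun k => pad N1 n1 k - pad N2 n2 k); split; first exact: sgB.
by rewrite -combine opprD addrACA.
Qed.

Lemma phi0_add : padd Tw phi0.
Proof.
move=> _ _ [b1 [N1 [n1 [B1 ->]]]] [b2 [N2 [n2 [B2 ->]]]].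
rewrite opprD addrACA combine !phi0E //; last exact: sgB.
by rewrite combineY.
Qed.

Lemma ext_phi : exists phi : H -> Y, [/\ is_hom phi, (forall b, B b -> phi b = 0) &
  (forall k, phi (w k) = e k)].
Proof.
have [phi [hphi ephi]] := inj_ext (@Y_div p hp) Tw_sub phi0_add.
exists phi; split => //.
  move=> b Bb; rewrite ephi; last by exists b, 0%N, (fun _ => 0); rewrite big_geq ?addr0.
  by have := phi0E 0%N (fun _ => 0) Bb; rewrite !big_geq // addr0.
move=> k; pose d j : int := if j == k then 1 else 0.
have ew : w k = 0 + \sum_(0 <= j < k.+1) w j *~ d j.
  rewrite add0r big_nat_recr //= /d eqxx big_nat_cond big1 ?add0r //.
  by move=> j /andP [/andP [_ jk] _]; rewrite (ltn_eqF jk) mulr0z.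
rewrite ephi; last by exists 0, k.+1, d; split => //; exact: sg0.
rewrite ew phi0E; last exact: sg0.
rewrite big_nat_recr //= /d eqxx big_nat_cond big1 ?add0r //.
by move=> j /andP [/andP [_ jk] _]; rewrite (ltn_eqF jk) mulr0z.
Qed.

Definition SDF := super_directly_finite.

Lemma key (X : zmodType) (hX : super_directly_finite X) (g : X -> H) (hg : is_hom g)
  (Wd : H -> Prop) (HW : subgroup Wd) (dW : divS Wd)
  (cover : forall x, Wd x -> exists b y, B b /\ x = b + g y)
  (wW : forall k, Wd (w k)) : False.
Proof.
have [phi [hphi phiB phiw]] := ext_phi.
pose I y := exists x, Wd x /\ y = phi x.
have HI : subgroup I.
  split; first by exists 0; split; [exact: sg0 | rewrite (hom0 hphi)].
  move=> _ _ [x1 [W1 ->]] [x2 [W2 ->]]; exists (x1 - x2); split; first exact: sgB.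
  by rewrite hphi.
have dI : forall y n, I y -> (0 < n)%N -> exists z, I z /\ z *+ n = y.
  move=> _ n [x [Wx ->]] n0; have [x' [Wx' ex]] := dW _ _ Wx n0.
  by exists (phi x'); split; [exists x' | rewrite -(homMn hphi) ex].
have eI : forall k, I (e k) by move=> k; exists (w k); rewrite phiw.
have allI := Y_gen HI dI eI.
apply: (@Y_notDF p hp); apply: (hX _ (phi \o g)); first exact: is_hom_comp.
move=> y; have [x [Wx ->]] := allI y; have [b [z [Bb ->]]] := cover _ Wx.
by exists z; rewrite /= (homD hphi) (phiB _ Bb) add0r.
Qed.
End Key.


Definition fin (H : zmodType) (P : H -> Prop) := exists L : seq H, forall x, P x -> x \in L.

Lemma fin_sub (H : zmodType) (P Q : H -> Prop) : (forall x, P x -> Q x) -> fin Q -> fin P.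
Proof. by move=> PQ [L hL]; exists L => x /PQ /hL. Qed.

Lemma fin_sum (H : zmodType) (P : H -> Prop) (L2 : seq H) : fin P ->
  fin (fun z => exists x y, [/\ P x, y \in L2 & z = x + y]).
Proof.
move=> [L1 h1]; exists [seq x + y | x <- L1, y <- L2] => _ [x [y [Px yL ->]]].
by apply: allpairs_f => //; exact: h1.
Qed.

Lemma pigeon (H : zmodType) (W : H -> Prop) (f : H -> H) c : fin W ->
  (forall x, W x -> W (f x)) -> injective f -> W c -> (forall x, W x -> f x <> c) -> False.
Proof.
move=> [L hL] fW finj Wc nc.
pose L' := undup [seq x <- L | `[< W x >]].
have memL' x : (x \in L') = `[< W x >].
  rewrite mem_undup mem_filter; apply/idP/idP => [/andP [] //|/[dup] /asboolP Wx ->].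
  by rewrite hL.
have U : uniq (map f L') by rewrite map_inj_uniq ?undup_uniq.
have sub : {subset map f L' <= L'}.
  move=> _ /mapP [x xL ->]; rewrite memL'; apply/asboolP; apply: fW.
  by apply/asboolP; rewrite -memL'.
have [_ eqm] := uniq_min_size U sub (eq_leq (esym (size_map f L'))).
have : c \in map f L' by rewrite eqm memL'; apply/asboolP.
case/mapP => x xL ecx; apply: (nc x); last by rewrite ecx.
by apply/asboolP; rewrite -memL'.
Qed.

Lemma mulz_red (H : zmodType) (y : H) (p : nat) (z : int) : (0 < p)%N -> y *+ p = 0 ->
  exists r, (r < p)%N /\ y *~ z = y *+ r.
Proof.
move=> p0 yp; have pz : p%:Z != 0 by rewrite eqz_nat -lt0n.
exists `|(z %% p%:Z)%Z|%N; split.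
  by rewrite -ltz_nat gez0_abs ?modz_ge0 //; apply: (ltz_mod z pz).
rewrite pmulrn gez0_abs ?modz_ge0 // {1}(divz_eq z p%:Z) mulrzDr.
by rewrite mulrC mulrzA -pmulrn yp mul0rz add0r.
Qed.

Section Greedy.
Variables (H : zmodType) (p : nat) (hp : prime p) (B : H -> Prop) (HB : subgroup B)
  (W : H -> Prop) (Wp : forall x, W x -> x *+ p = 0) (Winf : ~ fin W)
  (Bfin : fin (fun x => B x /\ x *+ p = 0)).

Definition BS (L : seq H) x := exists b (n : nat -> int),
  B b /\ x = b + \sum_(0 <= k < size L) nth 0 L k *~ n k.

Lemma BS_fin L : all (fun y => y *+ p == 0) L -> fin (fun x => BS L x /\ x *+ p = 0).
Proof.
elim/last_ind: L => [|L y IH].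
  move=> _; apply: fin_sub Bfin => x [[b [n [Bb ->]]] xp].
  by move: xp; rewrite big_geq // addr0.
rewrite all_rcons => /andP [/eqP yp /IH fL].
have p0 : (0 < p)%N by apply: prime_gt0.
apply: fin_sub (fin_sum [seq y *+ r | r <- iota 0 p] fL).
move=> x [[b [n [Bb ->]]] xp].
rewrite size_rcons big_nat_recr //= nth_rcons ltnn eqxx in xp *.
have [r [rp er]] := mulz_red (n (size L)) p0 yp.
set s := \sum_(0 <= i < size L) _ in xp *.
have es : s = \sum_(0 <= i < size L) nth 0 L i *~ n i.
  by apply: eq_big_nat => i /andP [_ iL]; rewrite nth_rcons iL.
exists (b + s), (y *+ r); split; last by rewrite er addrA.
  split; first by exists b, n; rewrite es.
  have -> : (b + s) *+ p = (b + s + y *+ r) *+ p - (y *+ r) *+ p by rewrite [in RHS]mulrnDl addrK.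
  by rewrite -er -addrA xp er -mulrnA mulnC mulrnA yp mul0rn subrr.
by apply/mapP; exists r => //; rewrite mem_iota.
Qed.

Definition next (L : seq H) := pick 0 (fun x => W x /\ ~ BS L x).

Lemma next_spec L : all (fun y => y *+ p == 0) L -> W (next L) /\ ~ BS L (next L).
Proof.
move=> hL; apply: (@pickP _ 0 (fun x => W x /\ ~ BS L x)).
case: (pselect (exists x, W x /\ ~ BS L x)) => // h; exfalso; apply: Winf.
apply: fin_sub (BS_fin hL) => x Wx; split; last exact: Wp.
by apply: contrapT => nb; apply: h; exists x.
Qed.

Fixpoint build (k : nat) : seq H :=
  if k is k'.+1 then rcons (build k') (next (build k')) else [::].
Definition wg k := next (build k).

Lemma build_all k : all (fun y => y *+ p == 0) (build k).
Proof.
elim: k => //= k IH; rewrite all_rcons IH andbT; apply/eqP; apply: Wp.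
by case: (next_spec IH).
Qed.

Lemma build_mkseq k : build k = mkseq wg k.
Proof. by elim: k => //= k IH; rewrite mkseqS -IH. Qed.

Lemma wg_spec k : W (wg k) /\ ~ BS (mkseq wg k) (wg k).
Proof. by rewrite -build_mkseq; apply: next_spec; apply: build_all. Qed.

Lemma wg_p k : wg k *+ p = 0. Proof. by apply: Wp; case: (wg_spec k). Qed.

Lemma wg_indep N (n : nat -> int) : B (\sum_(0 <= k < N) wg k *~ n k) ->
  forall k, (k < N)%N -> (p%:Z %| n k)%Z.
Proof.
elim: N n => [|N IH] n; first by [].
rewrite big_nat_recr //= => hB.
case: (boolP (p%:Z %| n N)%Z) => [dN|ndN].
  have hB' : B (\sum_(0 <= k < N) wg k *~ n k).
    by move: hB; rewrite (mulrz_p (wg_p N) dN) addr0.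
  move=> k; rewrite ltnS leq_eqVlt => /orP [/eqP ->|kN] //.
  exact: IH.
exfalso.
have cop : coprimez p%:Z (n N) by rewrite coprimezE prime_coprime // -dvdzE.
case/coprimezP: cop => [[a b]] /= hab.
have ew : wg N = (\sum_(0 <= k < N) wg k *~ n k + wg N *~ n N) *~ b +
   \sum_(0 <= k < N) wg k *~ (- (n k * b)).
  rewrite mulrzDl addrAC.
  have -> : (\sum_(0 <= k < N) wg k *~ n k) *~ b + \sum_(0 <= k < N) wg k *~ - (n k * b) = 0.
    rewrite mulrz_suml -big_split big_nat_cond big1 //= => k _.
    by rewrite mulrNz -mulrzA subrr.
  rewrite add0r -mulrzA -[LHS]mulr1z -hab mulrzDr [a * _]mulrC [wg N *~ (p%:Z * a)]mulrzA -pmulrn wg_p mul0rz add0r.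
  by rewrite mulrC.
case: (wg_spec N) => _; apply; exists ((\sum_(0 <= k < N) wg k *~ n k + wg N *~ n N) *~ b).
exists (fun k => - (n k * b)); split; first exact: sgMz.
rewrite size_mkseq {1}ew; congr (_ + _); apply: eq_big_nat => k /andP [_ kN].
by rewrite nth_mkseq.
Qed.

Lemma greedy : exists w : nat -> H, [/\ forall k, W (w k), forall k, w k *+ p = 0 &
  forall N (n : nat -> int), B (\sum_(0 <= k < N) w k *~ n k) ->
     forall k, (k < N)%N -> (p%:Z %| n k)%Z].
Proof.
exists wg; split; [by move=> k; case: (wg_spec k) | exact: wg_p | exact: wg_indep].
Qed.
End Greedy.


Section Div.
Variable H : zmodType.
Definition dv (x : H) := exists S : H -> Prop, [/\ subgroup S, divS S & S x].

Lemma dv_sub : subgroup dv.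
Proof.
split.
  exists (fun x => x = 0); split => //.
    by split=> // x y -> ->; rewrite subrr.
  by move=> x n -> _; exists 0; rewrite mul0rn.
move=> x y [S1 [H1 d1 S1x]] [S2 [H2 d2 S2y]].
exists (fun z => exists a b, [/\ S1 a, S2 b & z = a + b]); split.
- split; first by exists 0, 0; split; [exact: sg0|exact: sg0|rewrite addr0].
  move=> _ _ [a1 [b1 [A1 B1 ->]]] [a2 [b2 [A2 B2 ->]]].
  exists (a1 - a2), (b1 - b2); split; [exact: sgB|exact: sgB|].
  by rewrite opprD addrACA.
- move=> _ n [a [b [Aa Bb ->]]] n0.
  have [a' [Aa' ea]] := d1 _ _ Aa n0; have [b' [Bb' eb]] := d2 _ _ Bb n0.
  by exists (a' + b'); split; [exists a', b'|rewrite mulrnDl ea eb].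
- by exists x, (- y); split => //; exact: sgN.
Qed.

Lemma dv_div : divS dv.
Proof.
move=> x n [S [HS dS Sx]] n0; have [y [Sy ey]] := dS _ _ Sx n0.
by exists y; split => //; exists S.
Qed.

Lemma dv_of (S : H -> Prop) : subgroup S -> divS S -> forall x, S x -> dv x.
Proof. by move=> HS dS x Sx; exists S. Qed.
End Div.

Section Dec.
Variables (H : zmodType) (A C : H -> Prop) (HA : subgroup A) (HC : subgroup C)
  (AC : forall x, A x -> C x -> x = 0)
  (sumAC : forall g, exists a c, A a /\ C c /\ g = a + c).

Lemma dec_uniq a c a' c' : A a -> C c -> A a' -> C c' -> a + c = a' + c' -> a = a' /\ c = c'.
Proof.
move=> Aa Cc Aa' Cc' e.
have e1 : a - a' = c' - c.
  by rewrite -[a](addrK c) e addrAC (addrC a') addrK.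
have z : a - a' = 0 by apply: AC; [exact: sgB | rewrite e1; exact: sgB].
split; first by apply/eqP; rewrite -subr_eq0 z.
by apply/eqP; rewrite -subr_eq0 -oppr_eq0 opprB -e1 z.
Qed.

Lemma projA_dv a c : A a -> C c -> dv (a + c) ->
  exists S, [/\ subgroup S, divS S, (forall y, S y -> A y) & S a].
Proof.
move=> Aa Cc [S [HS dS Sx]].
exists (fun a' => A a' /\ exists c', C c' /\ S (a' + c')); split.
- split; first by split; [exact: sg0| exists 0; split; [exact: sg0| rewrite addr0; exact: sg0]].
  move=> x y [Ax [cx [Cx Sx']]] [Ay [cy [Cy Sy']]]; split; first exact: sgB.
  exists (cx - cy); split; first exact: sgB.
  by have := sgB HS Sx' Sy'; rewrite opprD addrACA.
- move=> x n [Ax [cx [Cx Sx']]] n0; have [y [Sy ey]] := dS _ _ Sx' n0.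
  have [a1 [c1 [A1 [C1 e1]]]] := sumAC y.
  have [ea _] : a1 *+ n = x /\ c1 *+ n = cx.
    apply: dec_uniq => //; [exact: sgMn|exact: sgMn|].
    by rewrite -mulrnDl -e1.
  by exists a1; split; [split => //; exists c1; rewrite -e1 | ].
- by move=> y [].
- by split => //; exists c.
Qed.

Lemma dv_projA a c : A a -> C c -> dv (a + c) -> dv a.
Proof.
move=> Aa Cc h; have [S [HS dS _ Sa]] := projA_dv Aa Cc h; exact: (dv_of HS dS).
Qed.
End Dec.

Lemma dv_projC (H : zmodType) (A C : H -> Prop) (HA : subgroup A) (HC : subgroup C)
  (AC : forall x, A x -> C x -> x = 0)
  (sumAC : forall g, exists a c, A a /\ C c /\ g = a + c) a c :
  A a -> C c -> dv (a + c) -> dv c.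
Proof.
move=> Aa Cc; rewrite addrC; apply: (dv_projA (A := C) (C := A)) => //.
  by move=> x Cx Ax; apply: AC.
by move=> g; have [a' [c' [Aa' [Cc' ->]]]] := sumAC g; exists c', a'; rewrite addrC.
Qed.

Lemma pairB (D R : zmodType) (a b : D * R) : a - b = (a.1 - b.1, a.2 - b.2).
Proof. by case: a b => [a1 a2] [b1 b2]. Qed.
Lemma pairD (D R : zmodType) (a b : D * R) : a + b = (a.1 + b.1, a.2 + b.2).
Proof. by case: a b => [a1 a2] [b1 b2]. Qed.

Section Main.
Variables (D R : zmodType) (divD : divisible D)
  (SD : super_directly_finite D) (SR : super_directly_finite R).

Section Img.
Variables (H : zmodType) (q : D * R -> H) (hq : is_hom q) (sq : forall h, exists g, q g = h).

Definition gD (d : D) : H := q (d, 0).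
Definition gR (r : R) : H := q (0, r).
Lemma gD_hom : is_hom gD.
Proof. by move=> x y; rewrite /gD -hq pairB /= subrr. Qed.
Lemma gR_hom : is_hom gR.
Proof. by move=> x y; rewrite /gR -hq pairB /= subrr. Qed.
Lemma q_split h : exists d r, h = gD d + gR r.
Proof.
have [[d r] <-] := sq h; exists d, r; rewrite /gD /gR -(homD hq).
by rewrite pairD /= addr0 add0r.
Qed.

Definition Dp (x : H) := exists d, x = gD d.
Lemma Dp_sub : subgroup Dp.
Proof.
split; first by exists 0; rewrite (hom0 gD_hom).
by move=> _ _ [a ->] [b ->]; exists (a - b); rewrite gD_hom.
Qed.
Lemma Dp_div : divS Dp.
Proof.
move=> _ n [d ->] n0; have [y ey] := divD d n0.
by exists (gD y); split; [exists y | rewrite -(homMn gD_hom) ey].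
Qed.
Lemma Dp_dv x : Dp x -> dv x.
Proof. exact: (dv_of Dp_sub Dp_div). Qed.


Lemma gR_surj_mod (S : H -> Prop) (HS : subgroup S) : (forall x, Dp x -> S x) ->
  forall z : qT HS, exists r, qpi HS (gR r) = z.
Proof.
move=> DS z; have [h ->] := qpi_surj z; have [d [r ->]] := q_split h.
exists r; apply/qpiE; rewrite opprD addrA addrAC subrr add0r; apply: sgN => //.
by apply: DS; exists d.
Qed.

Section Dec.
Variables (A C : H -> Prop) (f : H -> H) (HA : subgroup A) (HC : subgroup C)
  (AC : forall x, A x -> C x -> x = 0)
  (sumAC : forall g, exists a c, A a /\ C c /\ g = a + c)
  (hf : is_hom f) (finj : injective f) (fim : forall a, A a <-> exists g, f g = a).

Lemma fA g : A (f g). Proof. by apply/fim; exists g. Qed.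

Lemma f_dv x : dv x -> dv (f x).
Proof.
move=> [S [HS dS Sx]]; apply: (dv_of (S := fun y => exists s, S s /\ y = f s)).
- split; first by exists 0; split; [exact: sg0|rewrite (hom0 hf)].
  move=> _ _ [a [Sa ->]] [b [Sb ->]]; exists (a - b); split; [exact: sgB|by rewrite hf].
- move=> _ n [s [Ss ->]] n0; have [y [Sy ey]] := dS _ _ Ss n0.
  by exists (f y); split; [exists y|rewrite -(homMn hf) ey].
- by exists x.
Qed.

Lemma f_dv_inv x : dv (f x) -> dv x.
Proof.
rewrite -[f x]addr0 => h.
have [S [HS dS SA Sfx]] := projA_dv HA HC AC sumAC (fA x) (sg0 HC) h.
apply: (dv_of (S := fun g => S (f g))).
- split; first by rewrite (hom0 hf); exact: sg0.
  by move=> a b Sa Sb; rewrite hf; exact: sgB.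
- move=> g n Sg n0; have [y [Sy ey]] := dS _ _ Sg n0.
  have [g' eg'] := (fim y).1 (SA _ Sy).
  exists g'; split; first by rewrite eg'.
  by apply: finj; rewrite (homMn hf) eg'.
- by [].
Qed.

Lemma step1 c : C c -> dv c.
Proof.
move=> Cc; apply: contrapT => ndc.
pose Hq := qT (dv_sub H).
pose pi := qpi (dv_sub H).
have pi_hom : is_hom pi := qpi_hom _.
have piE x y : pi x = pi y <-> dv (x - y) := qpiE _ x y.
have pi0 x : pi x = 0 <-> dv x := qpi0 _ x.
have DFq : directly_finite Hq.
  apply: (SR (p := pi \o gR)); first exact: (is_hom_comp gR_hom pi_hom).
  by apply: gR_surj_mod => x; exact: Dp_dv.
apply: DFq.
pose A' (z : Hq) := exists a, A a /\ z = pi a.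
pose C' (z : Hq) := exists c, C c /\ z = pi c.
pose f' (z : Hq) := pi (f (qrep (HS := dv_sub H) z)).
have f'E x : f' (pi x) = pi (f x).
  by apply/piE; rewrite -hf; apply: f_dv; exact: qrep_pi.
exists A', C', f'; split; [|split; [|split; [|split; [|split; [|split]]]]].
- split; first by exists 0; split; [exact: sg0|].
  move=> _ _ [a [Aa ->]] [b [Ab ->]]; exists (a - b); split; [exact: sgB|by rewrite pi_hom].
- split; first by exists 0; split; [exact: sg0|].
  move=> _ _ [a [Aa ->]] [b [Ab ->]]; exists (a - b); split; [exact: sgB|by rewrite pi_hom].
- move=> _ [a [Aa ->]] [c' [Cc' /piE e]]; apply/pi0.
  exact: (dv_projA HA HC AC sumAC Aa (sgN HC Cc') e).
- move=> z; have [h ->] := qpi_surj z; have [a [c' [Aa [Cc' ->]]]] := sumAC h.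
  exists (pi a), (pi c'); split; [by exists a|split; [by exists c'|exact: (homD pi_hom)]].
- by exists (pi c); split; [exists c | move/pi0].
- move=> a b; have [x ->] := qpi_surj a; have [y ->] := qpi_surj b.
  by rewrite -/(pi x) -/(pi y) -(homB pi_hom) !f'E hf (homB pi_hom).
- split.
  + move=> a b; have [x ->] := qpi_surj a; have [y ->] := qpi_surj b.
    rewrite -/(pi x) -/(pi y) !f'E => /piE; rewrite -hf => /f_dv_inv h.
    by apply/piE.
  + move=> z; split.
      by move=> [a [Aa ->]]; have [g <-] := (fim a).1 Aa; exists (pi g); rewrite f'E.
    by move=> [g <-]; exists (f (qrep (HS := dv_sub H) g)); split => //; exact: fA.
Qed.

Lemma step2 p c0 : prime p -> C c0 -> c0 <> 0 -> c0 *+ p = 0 -> False.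
Proof.
move=> hp Cc0 nc0 pc0.
pose V x := Dp x /\ x *+ p = 0.
have finV : fin V.
  apply: contrapT => nV.
  have B0 : subgroup (fun x : H => x = 0) by split=> // x y -> ->; rewrite subrr.
  have B0fin : fin (fun x : H => x = 0 /\ x *+ p = 0).
    by exists [:: 0] => x [-> _]; rewrite inE.
  have [w [Vw wp ind]] := greedy hp B0 (W := V) (fun x h => h.2) nV B0fin.
  apply: (key hp B0 ind SD gD_hom Dp_sub Dp_div) => [x [d ->]|k].
    by exists 0, d; rewrite add0r.
  exact: (Vw k).1.
pose W (x : H) := dv x /\ x *+ p = 0.
have finW : fin W.
  apply: contrapT => nW.
  have [w [Ww wp ind]] := greedy hp Dp_sub (W := W) (fun x h => h.2) nW finV.
  apply: (key hp Dp_sub ind SR gR_hom (dv_sub H) (@dv_div H)) => [x _|k].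
    by have [d [r ->]] := q_split x; exists (gD d), r; split => //; exists d.
  exact: (Ww k).1.
apply: (pigeon finW (f := f) (c := c0)) => //.
- move=> x [dx px]; split; first exact: f_dv.
  by rewrite -(homMn hf) px (hom0 hf).
- by split => //; apply: step1.
- by move=> x _ e; apply: nc0; apply: AC => //; rewrite -e; exact: fA.
Qed.
End Dec.
End Img.

Lemma mulrz0_abs (H : zmodType) (x : H) (z : int) : x *~ z = 0 -> x *+ `|z|%N = 0.
Proof. by case: z => n //; rewrite NegzE mulrNz => /eqP; rewrite oppr_eq0 => /eqP. Qed.

Lemma img_df (H : zmodType) (q : D * R -> H) (hq : is_hom q) (sq : forall h, exists g, q g = h) :
  directly_finite H.
Proof.
move=> [A [C [f [HA [HC [AC [sumAC [[c [Cc nc]] [hf [finj fim]]]]]]]]]].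
case: (pselect (exists p c0, [/\ prime p, C c0, c0 <> 0 & c0 *+ p = 0])) =>
  [[p [c0 [hp Cc0 nc0 pc0]]]|nt].
  exact: (step2 hq sq HA HC AC sumAC hf finj fim hp Cc0 nc0 pc0).
have tf0 : forall N n c', (n <= N)%N -> (0 < n)%N -> C c' -> c' *+ n = 0 -> c' = 0.
  elim=> [|N IH] n c' nN n0 Cc' e; first by case: n nN n0 e.
  apply: contrapT => nc'.
  have n1 : (1 < n)%N.
    by case: n n0 e {nN} => [|[|n]] //; rewrite mulr1n.
  have hpr := pdiv_prime n1; have dvd := pdiv_dvd n.
  set pr := pdiv n in hpr dvd; set m := (n %/ pr)%N.
  have em : n = (m * pr)%N by rewrite divnK.
  have m0 : (0 < m)%N by rewrite divn_gt0 ?prime_gt0 // dvdn_leq.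
  have mn : (m < n)%N by rewrite ltn_Pdiv ?prime_gt1.
  case: (c' *+ m =P 0) => [em0|nem0].
    by apply: nc'; apply: (IH m) => //; rewrite -ltnS (leq_trans mn).
  apply: nt; exists pr, (c' *+ m); split => //; first exact: sgMn.
  by rewrite -mulrnA -em.
have tf n c' : (0 < n)%N -> C c' -> c' *+ n = 0 -> c' = 0 by apply: (tf0 n).
have dc : dv c := step1 hq sq HA HC AC sumAC hf finj fim Cc.
pose Kc x := forall T : H -> Prop, subgroup T -> T c -> (forall y, T y -> T (f y)) -> T x.
have HK : subgroup Kc.
  split; first by move=> T HT _ _; exact: sg0.
  by move=> x y Kx Ky T HT Tc Tf; apply: sgB => //; [exact: (Kx T HT Tc Tf)|exact: (Ky T HT Tc Tf)].
have Kc_c : Kc c by move=> T.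
have Kc_f y : Kc y -> Kc (f y) by move=> Ky T HT Tc Tf; apply: (Tf); exact: (Ky T HT Tc Tf).
have Kc_form x : Kc x -> exists (n : int) y, Kc y /\ x = c *~ n + f y.
  move=> Kx; apply: (Kx (fun x => exists (n : int) y, Kc y /\ x = c *~ n + f y)).
  - split; first by exists 0, 0; split; [exact: (sg0 HK)| rewrite mulr0z (hom0 hf) addr0].
    move=> _ _ [n1 [y1 [K1 ->]]] [n2 [y2 [K2 ->]]].
    exists (n1 - n2), (y1 - y2); split; first exact: (sgB HK).
    by rewrite mulrzBr hf opprD addrACA.
  - by exists 1, 0; split; [exact: (sg0 HK)| rewrite mulr1z (hom0 hf) addr0].
  - move=> y [n [y' [Ky' ey]]]; exists 0, y; split; last by rewrite mulr0z add0r.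
    rewrite ey; apply: (sgD HK); [exact: (sgMz HK) | exact: Kc_f].
have KcA x : Kc (f x) -> Kc x.
  move=> /Kc_form [n [y [Ky e]]].
  have e1 : c *~ n = f (x - y) by rewrite hf e addrK.
  have z : c *~ n = 0 by apply: AC; [rewrite e1; exact: (fA fim) | exact: (sgMz HC n Cc)].
  have : x - y = 0 by apply: finj; rewrite (hom0 hf) -e1 z.
  by move/eqP; rewrite subr_eq0 => /eqP ->.
have [y [dy ey]] := dv_div dc (ltn0Sn 1).
have [a1 [c1 [Aa1 [Cc1 e1]]]] := sumAC y.
have ec1 : c1 *+ 2 = c.
  have e2 : a1 *+ 2 + c1 *+ 2 = 0 + c by rewrite -mulrnDl -e1 ey add0r.
  by case: (dec_uniq HA HC AC (sgMn HA 2 Aa1) (sgMn HC 2 Cc1) (sg0 HA) Cc e2).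
have nK1 : ~ Kc c1.
  move=> /Kc_form [n [y' [Ky' e]]].
  have fy0 : f y' = 0.
    apply: AC; first exact: (fA fim).
    have -> : f y' = c1 - c *~ n by rewrite e addrC addKr.
    by apply: sgB => //; apply: sgMz.
  move: e; rewrite fy0 addr0 -ec1 pmulrn -mulrzA => e.
  have : c1 *~ (1 - 2 * n) = 0 by rewrite mulrzBr mulr1z -e subrr.
  move/mulrz0_abs => h; apply: nc; rewrite -ec1 (tf _ c1 _ Cc1 h) ?mul0rn //.
  rewrite absz_gt0; apply/eqP => e0.
  have : (2%:Z %| 2 * n)%Z by apply: dvdz_mulr.
  by have -> : 2 * n = 1 by apply/eqP; rewrite -subr_eq0 -opprB e0 oppr0.
pose Hq := qT HK.
pose pi := qpi HK.
have pi_hom : is_hom pi := qpi_hom _.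
have piE x y : pi x = pi y <-> Kc (x - y) := qpiE _ x y.
have pi0 x : pi x = 0 <-> Kc x := qpi0 _ x.
pose A' (z : Hq) := exists a, A a /\ z = pi a.
pose C' (z : Hq) := exists c, C c /\ z = pi c.
pose f' (z : Hq) := pi (f (qrep (HS := HK) z)).
have f'E x : f' (pi x) = pi (f x).
  by apply/piE; rewrite -hf; apply: Kc_f; exact: qrep_pi.
have HA' : subgroup A'.
  split; first by exists 0; split; [exact: sg0|].
  move=> _ _ [a [Aa ->]] [b [Ab ->]]; exists (a - b); split; [exact: sgB|by rewrite pi_hom].
have HC' : subgroup C'.
  split; first by exists 0; split; [exact: sg0|].
  move=> _ _ [a [Aa ->]] [b [Ab ->]]; exists (a - b); split; [exact: sgB|by rewrite pi_hom].
have AC' : forall z, A' z -> C' z -> z = 0.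
  move=> _ [a [Aa ->]] [c' [Cc' /piE Kac]].
  have [n [y' [Ky' e]]] := Kc_form _ Kac.
  have [_ e2] := dec_uniq HA HC AC Aa (sgN HC Cc') (fA fim y') (sgMz HC n Cc) (etrans e (addrC _ _)).
  have Kc' : Kc c' by rewrite -[c']opprK e2; apply: (sgN HK); apply: (sgMz HK).
  by apply/pi0; rewrite -[a](subrK c'); exact: (sgD HK).
have sumAC' : forall g, exists a c, A' a /\ C' c /\ g = a + c.
  move=> z; have [h ->] := qpi_surj z; have [a [c' [Aa [Cc' ->]]]] := sumAC h.
  exists (pi a), (pi c'); split; [by exists a|split; [by exists c'|exact: (homD pi_hom)]].
have hf' : is_hom f'.
  move=> a b; have [x ->] := qpi_surj a; have [y0 ->] := qpi_surj b.
  by rewrite -/(pi x) -/(pi y0) -(homB pi_hom) !f'E hf (homB pi_hom).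
have finj' : injective f'.
  move=> a b; have [x ->] := qpi_surj a; have [y0 ->] := qpi_surj b.
  rewrite -/(pi x) -/(pi y0) !f'E => /piE; rewrite -hf => /KcA h.
  by apply/piE.
have fim' : forall a, A' a <-> exists g, f' g = a.
  move=> z; split.
    by move=> [a [Aa ->]]; have [g <-] := (fim a).1 Aa; exists (pi g); rewrite f'E.
  by move=> [g <-]; exists (f (qrep (HS := HK) g)); split => //; exact: (fA fim).
have hq' : is_hom (pi \o q) := is_hom_comp hq pi_hom.
have sq' : forall h, exists g, (pi \o q) g = h.
  move=> z; have [h ->] := qpi_surj z; have [g <-] := sq h; by exists g.
apply: (step2 hq' sq' HA' HC' AC' sumAC' hf' finj' fim' (p := 2) (c0 := pi c1)) => //.
- by exists c1.
- by move/pi0.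
- by rewrite -(homMn pi_hom) ec1; apply/pi0.
Qed.

End Main.


Theorem proposition5p2 (D R : zmodType) :
  divisible D -> reduced R ->
  (super_directly_finite (D * R)%type <->
   super_directly_finite D /\ super_directly_finite R).
Proof.
move=> divD _; split.
- move=> hG; split.
  + move=> H p hp sp; apply: (hG H (p \o fst)).
      by move=> [x1 x2] [y1 y2]; rewrite /= -hp.
    by move=> h; have [d <-] := sp h; exists (d, 0).
  + move=> H p hp sp; apply: (hG H (p \o snd)).
      by move=> [x1 x2] [y1 y2]; rewrite /= -hp.
    by move=> h; have [r <-] := sp h; exists (0, r).
- by move=> [SD SR] H q hq sq; exact: (img_df divD SD SR hq sq).
Qed.
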